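(* Let $\Phi=\forall u_1\ldots\forall u_n\exists e_1(D_1)\ldots\exists e_m(D_m).\varphi$ be a DQBF with prefix $\mathcal{Q}$, let $A$ be a set of arbiter variables, let $\psi$ be a CNF with $\mathit{var}(\psi)\subseteq U\cup E\cup A$, and let $C=\neg p\vee\ell$ be a forcing clause in $\psi$. Then $\mathcal{Q}\exists A(\emptyset).\psi\wedge C$ is true if and only if $\mathcal{Q}\exists A(\emptyset).\psi$ is true.
   Context: For a set $V$ of variables, $[V]$ is the set of assignments $V\to\{\textsc{true},\textsc{false}\}$; assignments are identified with terms of the literals they make true, $\neg\sigma$ is the clause of the negations of these literals, and $\sigma|_W$ denotes restriction to (the part of the domain lying in) $W$. A DQBF is $\forall u_1\ldots\forall u_n\exists e_1(D_1)\ldots\exists e_m(D_m).\varphi$ with pairwise distinct variables, $U=\{u_i\}$, $E=\{e_j\}$, dependency sets $D(e_j)=D_j\subseteq U$, and $\varphi$ a CNF over $U\cup E$; a model is a family $F=(F_e)_{e}$ with $F_e:[D(e)]\to\{\textsc{true},\textsc{false}\}$ such that for every $\sigma\in[U]$, $\sigma\cup F(\sigma)$ satisfies the matrix, where $F(\sigma)$ assigns each existential $e$ the value $F_e(\sigma|_{D(e)})$; the DQBF is true iff it has a model. Arbiter variables are fresh variables $e^\sigma$ for $e\in E$, $\sigma\in[D(e)]$. For a set $A$ of them and a CNF $\psi$, $\mathcal{Q}\exists A(\emptyset).\psi$ is the DQBF whose prefix is that of $\Phi$ extended by every variable of $A$ as an existential variable with empty dependency set, and whose matrix is $\psi$. Forcing: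 let $\ell$ be a literal on a variable in $E$, $\psi$ a formula with $\mathit{var}(\psi)\subseteq U\cup E\cup A$, and $\sigma$ a partial assignment to $U\cup A$; $\ell$ is forced by $\sigma$ in $\psi$ if $\psi\wedge\sigma\wedge\neg\ell$ is unsatisfiable, and in that case $\neg(\sigma|_{D(\mathit{var}(\ell))\cup A})\vee\ell$ is called a forcing clause in $\psi$. *)

(* Defs.v *)
From HB Require Import structures.
From mathcomp Require Import all_boot.

Set Implicit Arguments.
Unset Strict Implicit.
Unset Printing Implicit Defensive.

(* A literal is a variable together with its polarity: (x, true) is x,
   (x, false) is the negation of x. *)
Definition literal (W : Type) := (W * bool)%type.
Definition clause (W : Type) := seq (literal W).
Definition cnf (W : Type) := seq (clause W).

Definition lit_sat (W : Type) (a : W -> bool) (l : literal W) : bool :=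
  a l.1 == l.2.
Definition cnf_sat (W : Type) (a : W -> bool) (f : cnf W) : bool :=
  all (fun C => has (lit_sat a) C) f.

Definition vars_in (W : eqType) (f : cnf W) (S : pred W) : Prop :=
  forall C l, C \in f -> l \in C -> S l.1.

Definition restr (W : finType) (sigma : W -> bool) (S : {set W})
  : {ffun {x : W | x \in S} -> bool} := [ffun x => sigma (val x)].

Definition model_ext (W : finType) (E : {set W}) (D : W -> {set W})
  (F : forall e : W, {ffun {x : W | x \in D e} -> bool} -> bool)
  (sigma : W -> bool) : W -> bool :=
  fun x => if x \in E then F x (restr sigma (D x)) else sigma x.

(* F is a model of the DQBF with universals U, existentials E,
   dependency sets D and matrix f. An element of [U] is represented by a
   total assignment that is false outside U. *)
Definition is_model (W : finType) (U E : {set W}) (D : W -> {set W})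
  (f : cnf W) (F : forall e : W, {ffun {x : W | x \in D e} -> bool} -> bool)
  : Prop :=
  forall sigma : {ffun W -> bool},
    (forall x, x \notin U -> sigma x = false) ->
    cnf_sat (@model_ext W E D F sigma) f.

Definition dqbf_true (W : finType) (U E : {set W}) (D : W -> {set W})
  (f : cnf W) : Prop :=
  exists F, @is_model W U E D f F.

Definition wf_dqbf (W : finType) (U E : {set W}) (D : W -> {set W})
  (f : cnf W) : Prop :=
  [/\ [disjoint U & E], (forall e, e \in E -> D e \subset U)
    & vars_in f (fun x => (x \in U) || (x \in E))].

(* Variables of the extended formula: original variables [inl x], and
   arbiter variables [inr (e, s)] standing for e^sigma where sigma is the
   assignment to D(e) making exactly the variables of s true. *)
Notation avar X := (X + (X * {set X}))%type.

Definition is_arbiter_set (X : finType) (E : {set X}) (D : X -> {set X})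
  (A : {set X * {set X}}) : Prop :=
  forall a, a \in A -> a.1 \in E /\ a.2 \subset D a.1.

Definition extU (X : finType) (U : {set X}) : {set avar X} := inl @: U.
Definition extE (X : finType) (E : {set X}) (A : {set X * {set X}})
  : {set avar X} := (inl @: E) :|: (inr @: A).
Definition extD (X : finType) (D : X -> {set X}) (w : avar X) : {set avar X} :=
  match w with inl x => inl @: D x | inr _ => set0 end.

Definition forced (X : finType) (psi : cnf (avar X))
  (sigma : {ffun avar X -> option bool}) (l : literal (avar X)) : Prop :=
  ~ exists a : avar X -> bool,
      [/\ cnf_sat a psi, (forall w b, sigma w = Some b -> a w = b)
        & ~~ lit_sat a l].

(* ¬(σ|_{D(var ℓ) ∪ A}) ∨ ℓ *)
Definition forcing_clause (X : finType) (D : X -> {set X})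
  (A : {set X * {set X}}) (sigma : {ffun avar X -> option bool})
  (l : literal (avar X)) : clause (avar X) :=
  pmap (fun w => if w \in extD D l.1 :|: inr @: A
                 then omap (fun b => (w, ~~ b)) (sigma w) else None)
       (enum {: avar X}) ++ [:: l].

(* Main.v *)
Require Import Defs.
From HB Require Import structures.
From mathcomp Require Import all_boot.

Lemma inl_extE (X : finType) (E : {set X}) (A : {set X * {set X}}) (u : X) :
  (@inl X (X * {set X}) u \in extE E A) = (u \in E).
Proof.
rewrite /extE in_setU mem_imset; last by move=> ? ? [].
case: (u \in E) => //=; apply/negbTE/imsetP => -[? _] //.
Qed.

Lemma inr_extE (X : finType) (E : {set X}) (A : {set X * {set X}}) x :
  x \in A -> (@inr X (X * {set X}) x \in extE E A).
Proof. by move=> Hx; rewrite /extE in_setU mem_imset ?Hx ?orbT //; move=> ? ? []. Qed.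

Theorem corollary2 (X : finType) (U E : {set X}) (D : X -> {set X})
  (phi : cnf X) (A : {set X * {set X}}) (psi : cnf (avar X))
  (sigma : {ffun avar X -> option bool}) (l : literal (avar X)) :
  wf_dqbf U E D phi ->
  is_arbiter_set E D A ->
  vars_in psi (fun w => (w \in extU U) || (w \in extE E A)) ->
  (forall w, sigma w != None -> w \in extU U :|: inr @: A) ->
  l.1 \in inl @: E ->
  forced psi sigma l ->
  dqbf_true (extU U) (extE E A) (extD D) (psi ++ [:: forcing_clause D A sigma l])
  <-> dqbf_true (extU U) (extE E A) (extD D) psi.
Proof.
move=> [HUE HDU _] _ _ Hsig Hl Hforced; split.
  move=> [F HF]; exists F => s0 H0; move: (HF s0 H0).
  by rewrite /cnf_sat all_cat => /andP[].
move=> [F HF]; exists F => s0 H0.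
rewrite /cnf_sat all_cat; apply/andP; split; first exact: HF.
rewrite /= andbT.
set a := model_ext (extE E A) F s0.
case: (boolP (has (lit_sat a) _)) => // Hn; exfalso.
rewrite /forcing_clause has_cat negb_or /= orbF in Hn.
case/andP: Hn => /hasPn Hn Hnl.
have Hagree : forall w b, w \in extD D l.1 :|: inr @: A -> sigma w = Some b ->
    a w = b.
  move=> w b Hw Hs.
  have : (w, ~~ b) \in pmap (fun w => if w \in extD D l.1 :|: inr @: A
                 then omap (fun b => (w, ~~ b)) (sigma w) else None)
       (enum {: avar X}).
    rewrite mem_pmap; apply/mapP; exists w; first by rewrite mem_enum.
    by rewrite Hw Hs.
  move/Hn; rewrite /lit_sat /=.
  clear Hs Hw; by case: (a w); case: b.
case/imsetP: Hl => e He Hle.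
have inlU : forall u, u \in U -> @inl X (X * {set X}) u \in extU U.
  by move=> u Hu; rewrite /extU mem_imset //; move=> ? ? [].
pose s1 : {ffun avar X -> bool} :=
  [ffun w => if sigma w is Some b then (if w \in extU U then b else s0 w)
             else s0 w].
have H1 : forall w, w \notin extU U -> s1 w = false.
  move=> w Hw; rewrite ffunE; case: (sigma w) => [b|]; last exact: H0.
  by rewrite (negbTE Hw); apply: H0.
apply: Hforced; exists (model_ext (extE E A) F s1); split.
- exact: HF.
- move=> w b Hs.
  have : w \in extU U :|: inr @: A by apply: Hsig; rewrite Hs.
  rewrite in_setU => /orP[Hw|].
    case/imsetP: (Hw) => u Hu Hwu; subst w.
    rewrite /model_ext inl_extE (disjointFr HUE Hu) ffunE.
    by rewrite Hs Hw.
  case/imsetP => x Hx Hwx; subst w.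
  rewrite /model_ext ((@inr_extE _ E _ _ Hx)).
  rewrite -(Hagree (inr x) b) //; last by rewrite in_setU mem_imset ?Hx ?orbT //; move=> ? ? [].
  rewrite /a /model_ext ((@inr_extE _ E _ _ Hx)); congr (F _ _).
  by apply/ffunP => -[y Hy]; exfalso; move: Hy; rewrite /= in_set0.
- move: Hnl; rewrite /lit_sat Hle.
  have -> : model_ext (extE E A) F s1 (inl e) = a (inl e); last by [].
  rewrite /a /model_ext inl_extE He; congr (F _ _).
  apply/ffunP => -[y Hy]; rewrite !ffunE /=.
  have Hy' := Hy; rewrite /= in Hy'.
  case/imsetP: Hy' => u Hu Hyu.
  have HuU : u \in U by apply: (subsetP (HDU e He)).
  case Hs: (sigma y) => [b|] //.
  rewrite Hyu inlU //.
  rewrite -(Hagree y b) //; last by rewrite in_setU Hle Hy.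
  by rewrite /a /model_ext Hyu inl_extE (disjointFr HUE HuU).
Qed.
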